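(* If $(P,\tau,\leq)$ is a Priestley space, then $\tau \subseteq \tau_o(P)$.
   Context: A Priestley space is a triple $(P,\tau,\leq)$ where $(P,\leq)$ is a partially ordered set and $\tau$ is a compact topology on $P$ such that the space is totally order-disconnected: whenever $x\not\leq y$ there is a $\tau$-clopen up-set $U$ (i.e. $u\in U$, $u\leq v$ imply $v\in U$) with $x\in U$ and $y\notin U$. For $A\subseteq P$ let $A^l=\{x\in P: x\leq a \text{ for all } a\in A\}$ and $A^u=\{x\in P: x\geq a\text{ for all } a\in A\}$; for a family $\mathcal{S}$ of subsets of $P$ let $\mathcal{S}^l=\bigcup\{S^l: S\in\mathcal{S}\}$ and $\mathcal{S}^u=\bigcup\{S^u:S\in\mathcal{S}\}$. $\bigwedge A$ denotes the greatest element of $A^l$ (if it exists) and $\bigvee A$ the least element of $A^u$ (if it exists). A filter $\mathcal{F}$ on $P$ (a nonempty family of subsets of $P$ not containing $\emptyset$, closed under finite intersections and supersets) order-converges to $x\in P$ if $\bigwedge \mathcal{F}^u = x = \bigvee \mathcal{F}^l$. The order convergence topology is $\tau_o(P)=\{U\subseteq P: \text{for every } x\in U \text{ and every filter } \mathcal{F} \text{ on } P \text{ order-converging to } x, \ U\in\mathcal{F}\}$. *)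

(* Defs.v *)
From Stdlib Require Import Classical List.

Set Implicit Arguments.

Definition set (T : Type) := T -> Prop.

Section Defs.
Variable T : Type.

Definition is_partial_order (le : T -> T -> Prop) : Prop :=
  (forall x, le x x) /\
  (forall x y, le x y -> le y x -> x = y) /\
  (forall x y z, le x y -> le y z -> le x z).

Definition is_topology (tau : set (set T)) : Prop :=
  tau (fun _ => True) /\
  (forall F : set (set T), (forall U, F U -> tau U) ->
      tau (fun x => exists U, F U /\ U x)) /\
  (forall U V, tau U -> tau V -> tau (fun x => U x /\ V x)).

Definition compact_topology (tau : set (set T)) : Prop :=
  forall (I : Type) (U : I -> set T),
    (forall i, tau (U i)) -> (forall x, exists i, U i x) ->
    exists l : list I, forall x, exists i, List.In i l /\ U i x.

Definition closed_in (tau : set (set T)) (A : set T) : Prop :=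
  tau (fun x => ~ A x).

Definition clopen (tau : set (set T)) (A : set T) : Prop :=
  tau A /\ closed_in tau A.

Definition up_set (le : T -> T -> Prop) (U : set T) : Prop :=
  forall u v, U u -> le u v -> U v.

Definition totally_order_disconnected (tau : set (set T)) (le : T -> T -> Prop) :=
  forall x y, ~ le x y ->
    exists U, clopen tau U /\ up_set le U /\ U x /\ ~ U y.

Definition Priestley_space (tau : set (set T)) (le : T -> T -> Prop) : Prop :=
  is_partial_order le /\ is_topology tau /\ compact_topology tau /\
  totally_order_disconnected tau le.

Definition lower_bounds (le : T -> T -> Prop) (A : set T) : set T :=
  fun x => forall a, A a -> le x a.
Definition upper_bounds (le : T -> T -> Prop) (A : set T) : set T :=
  fun x => forall a, A a -> le a x.

Definition fam_lower (le : T -> T -> Prop) (S : set (set T)) : set T :=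
  fun x => exists A, S A /\ lower_bounds le A x.
Definition fam_upper (le : T -> T -> Prop) (S : set (set T)) : set T :=
  fun x => exists A, S A /\ upper_bounds le A x.

Definition is_inf (le : T -> T -> Prop) (A : set T) (x : T) : Prop :=
  lower_bounds le A x /\ forall y, lower_bounds le A y -> le y x.
Definition is_sup (le : T -> T -> Prop) (A : set T) (x : T) : Prop :=
  upper_bounds le A x /\ forall y, upper_bounds le A y -> le x y.

Definition is_filter (F : set (set T)) : Prop :=
  (exists A, F A) /\
  ~ F (fun _ => False) /\
  (forall A B, F A -> F B -> F (fun x => A x /\ B x)) /\
  (forall A B, F A -> (forall x, A x -> B x) -> F B).

Definition order_converges (le : T -> T -> Prop) (F : set (set T)) (x : T) : Prop :=
  is_inf le (fam_upper le F) x /\ is_sup le (fam_lower le F) x.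

Definition tau_o (le : T -> T -> Prop) : set (set T) :=
  fun U => forall x, U x -> forall F, is_filter F -> order_converges le F x -> F U.

End Defs.

(* Main.v *)
Require Import Defs.
From Stdlib Require Import Classical List.

Lemma sep_lemma (P : Type) (tau : set (set P)) (le : P -> P -> Prop)
  (F : set (set P)) (x y : P) :
  is_partial_order le -> totally_order_disconnected tau le ->
  order_converges le F x -> x <> y ->
  exists O, tau O /\ O y /\ exists A, F A /\ forall z, A z -> ~ O z.
Proof.
  intros [Hr [Ha Ht]] Htod [[Hinf1 Hinf2] [Hsup1 Hsup2]] Hxy.
  destruct (classic (le x y)) as [Hle|Hnle].
  - assert (Hyx : ~ le y x) by (intro H; apply Hxy; apply Ha; auto).
    assert (Hnlb : ~ lower_bounds le (fam_upper le F) y)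
      by (intro H; apply Hyx; apply Hinf2; exact H).
    apply not_all_ex_not in Hnlb as [u Hu].
    apply imply_to_and in Hu as [[B [HB HBu]] Hyu].
    destruct (Htod _ _ Hyu) as [W [[HW _] [Hup [HWy HWu]]]].
    exists W; split; [exact HW|split; [exact HWy|]].
    exists B; split; [exact HB|].
    intros z Hz HWz. apply HWu. eapply Hup; [exact HWz| apply HBu; exact Hz].
  - assert (Hnub : ~ upper_bounds le (fam_lower le F) y)
      by (intro H; apply Hnle; apply Hsup2; exact H).
    apply not_all_ex_not in Hnub as [l Hl].
    apply imply_to_and in Hl as [[A [HA HAl]] Hly].
    destruct (Htod _ _ Hly) as [W [[_ HW] [Hup [HWl HWy]]]].
    exists (fun z => ~ W z); split; [exact HW|split; [exact HWy|]].
    exists A; split; [exact HA|].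
    intros z Hz HnW. apply HnW. eapply Hup; [exact HWl| apply HAl; exact Hz].
Qed.

Theorem corollary2p2 (P : Type) (tau : set (set P)) (le : P -> P -> Prop) :
  Priestley_space tau le ->
  forall U : set P, tau U -> tau_o le U.
Proof.
  intros [Hpo [Htop [Hcomp Htod]]] U HU x Hx F HF Hconv.
  destruct HF as [[A0 HA0] [_ [Hint Hsup]]].
  pose (good := fun O : set P => tau O /\
         (O = U \/ exists A, F A /\ forall z, A z -> ~ O z)).
  pose (I := {O : set P | good O}).
  destruct (Hcomp I (fun i => proj1_sig i)) as [l Hl].
  - intros i; exact (proj1 (proj2_sig i)).
  - intros z. destruct (classic (U z)) as [Hz|Hz].
    + exists (exist good U (conj HU (or_introl eq_refl))); exact Hz.
    + assert (Hxz : x <> z) by (intro E; subst; contradiction).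
      destruct (@sep_lemma P tau le F x z Hpo Htod Hconv Hxz) as [O [HO [HOz HA]]].
      exists (exist good O (conj HO (or_intror HA))); exact HOz.
  - assert (Hgen : forall l : list I, exists A, F A /\
       forall z, A z -> forall i, In i l -> proj1_sig i z -> U z).
    { induction l0 as [|i l' IH].
      - exists A0; split; [exact HA0|]. intros z _ i [].
      - destruct IH as [A [HA HAp]].
        destruct i as [O [HO [E|[B [HB HBp]]]]].
        + exists A; split; [exact HA|]. intros z Hz j [<-|Hj] Hjz.
          * simpl in Hjz; subst; exact Hjz.
          * eapply HAp; eauto.
        + exists (fun z => A z /\ B z); split; [apply Hint; auto|].
          intros z [Hz1 Hz2] j [<-|Hj] Hjz.
          * exfalso; exact (HBp z Hz2 Hjz).
          * eapply HAp; eauto. }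
    destruct (Hgen l) as [A [HA HAp]].
    apply (Hsup A); [exact HA|].
    intros z Hz. destruct (Hl z) as [i [Hi Hiz]]. eapply HAp; eauto.
Qed.
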